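(* Let $A=(a_{ij})$ and $B=(b_{ij})$ be two $n\times n$ generalized tournament matrices. If $A$ and $B$ have the same principal minors of orders $2$ and $3$, then the connected components of $\mathcal{E}(A,B)$ and of $\mathcal{D}(A,B)$ are clans of $A$ and of $B$.
   Context: A generalized tournament matrix of order $n$ is a real $n\times n$ matrix $M=(m_{ij})$ with nonnegative entries satisfying $M+M^{t}=J_n-I_n$. Write $[n]=\{1,\ldots,n\}$. A clan of $M$ is a subset $X\subseteq[n]$ such that for all $i,j\in X$ and $k\in[n]\setminus X$, $m_{ik}=m_{jk}$ and $m_{ki}=m_{kj}$. When $A,B$ have the same principal minors of order $2$, for $i\neq j$ one has $a_{ij}=b_{ij}$ or $a_{ij}=1-b_{ij}$. Let $P_{=}=\{\{i,j\}: a_{ij}=b_{ij},\ a_{ij}\neq 1/2\}$ and $P_{\neq}=\{\{i,j\}: a_{ij}=1-b_{ij},\ a_{ij}\neq 1/2\}$. The equality graph $\mathcal{E}(A,B)$ and the difference graph $\mathcal{D}(A,B)$ are the undirected graphs on vertex set $[n]$ with edge sets $P_{=}$ and $P_{\neq}$ respectively. *)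

(* Defs.v *)
From HB Require Import structures.
From mathcomp Require Import all_boot all_order all_algebra.
Set Implicit Arguments. Unset Strict Implicit. Unset Printing Implicit Defensive.
Import Order.TTheory GRing.Theory Num.Theory.
Local Open Scope ring_scope.

Definition gen_tournament (R : realFieldType) (n : nat) (M : 'M[R]_n) : Prop :=
  (forall i j, 0 <= M i j) /\ (M + M^T = const_mx 1 - 1%:M).

Definition principal_minor (R : realFieldType) (n : nat) (M : 'M[R]_n)
  (S : {set 'I_n}) : R :=
  \det (mxsub (@enum_val _ (mem S)) (@enum_val _ (mem S)) M).

Definition same_pminors (R : realFieldType) (n k : nat) (A B : 'M[R]_n) : Prop :=
  forall S : {set 'I_n}, #|S| = k -> principal_minor A S = principal_minor B S.

Definition clan (R : realFieldType) (n : nat) (M : 'M[R]_n) (X : {set 'I_n}) : Prop :=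
  forall i j k, i \in X -> j \in X -> k \notin X ->
    M i k = M j k /\ M k i = M k j.

Definition eq_graph (R : realFieldType) (n : nat) (A B : 'M[R]_n) : rel 'I_n :=
  fun i j => [&& i != j, A i j == B i j & A i j != 2^-1].

Definition diff_graph (R : realFieldType) (n : nat) (A B : 'M[R]_n) : rel 'I_n :=
  fun i j => [&& i != j, A i j == 1 - B i j & A i j != 2^-1].

Definition component (n : nat) (e : rel 'I_n) (i : 'I_n) : {set 'I_n} :=
  [set j | connect e i j].

(* Main.v *)
Require Import Defs.
From HB Require Import structures.
From mathcomp Require Import all_boot all_order all_algebra.
From mathcomp Require Import ring lra.
Import Order.TTheory GRing.Theory Num.Theory.
Local Open Scope ring_scope.

Lemma det3_gen (R : comNzRingType) (N : 'M[R]_3) : \det N =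
  N 0 0 * (N 1 1 * N 2 2 - N 1 2 * N 2 1) - N 0 1 * (N 1 0 * N 2 2 - N 1 2 * N 2 0)
  + N 0 2 * (N 1 0 * N 2 1 - N 1 1 * N 2 0).
Proof.
rewrite (expand_det_row _ 0) !big_ord_recl big_ord0 /cofactor.
rewrite !(expand_det_row _ 0) !big_ord_recl !big_ord0 /cofactor.
rewrite !det_mx11 !mxE /=.
pose g (a b : nat) := N (inord a) (inord b).
have E : forall i j, N i j = g i j by move=> i j; rewrite /g !inord_val.
rewrite !E /bump /= !expr0 !expr1 ?exprS ?expr0.
rewrite /g /bump /= ?add0n ?add1n ?addn1 ?addn0 /= ?modn_small //; ring.
Qed.

Lemma det2_gen (R : comNzRingType) (N : 'M[R]_2) : \det N =
  N 0 0 * N 1 1 - N 0 1 * N 1 0.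
Proof.
rewrite (expand_det_row _ 0) !big_ord_recl big_ord0 /cofactor.
rewrite !det_mx11 !mxE /=.
pose g (a b : nat) := N (inord a) (inord b).
have E : forall i j : 'I_2, N i j = g i j by move=> i j; rewrite /g !inord_val.
rewrite !E /g /bump /= ?add0n ?add1n ?addn1 ?addn0 /= ?modn_small // !expr0 ?expr1; ring.
Qed.

Definition cyc {R : realFieldType} {n : nat} (M : 'M[R]_n) (p q k : 'I_n) : R :=
  M p q * M q k * M k p + M p k * M k q * M q p.

Lemma minor2 (R : realFieldType) (n : nat) (M : 'M[R]_n) (u v : 'I_n) :
  u != v -> (forall i, M i i = 0) ->
  principal_minor M [set u; v] = - (M u v * M v u).
Proof.
move=> uv Hd; rewrite /principal_minor.
have gen : forall k (f : 'I_k -> 'I_n), k = 2%N -> injective f ->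
    (forall t, f t \in [set u; v]) -> \det (mxsub f f M) = - (M u v * M v u).
  move=> k f Ek; subst k => finj fS.
  rewrite det2_gen !mxE !Hd.
  have h01 : f 0 != f 1 by apply/eqP => /finj.
  move: h01.
  case/set2P: (fS 0) => ->; case/set2P: (fS 1) => ->; rewrite ?eqxx //= => _; ring.
apply: gen; [by rewrite cards2 uv | exact: enum_val_inj | exact: enum_valP].
Qed.

Lemma minor3 (R : realFieldType) (n : nat) (M : 'M[R]_n) (u v w : 'I_n) :
  u != v -> u != w -> v != w -> (forall i, M i i = 0) ->
  principal_minor M [set u; v; w] = cyc M u v w.
Proof.
move=> uv uw vw Hd; rewrite /principal_minor /cyc.
have gen : forall k (f : 'I_k -> 'I_n), k = 3%N -> injective f ->
    (forall t, f t \in [set u; v; w]) -> \det (mxsub f f M) =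
      M u v * M v w * M w u + M u w * M w v * M v u.
  move=> k f Ek; subst k => finj fS.
  rewrite det3_gen !mxE !Hd.
  have h01 : f 0 != f 1 by apply/eqP => /finj.
  have h02 : f 0 != f 2 by apply/eqP => /finj.
  have h12 : f 1 != f 2 by apply/eqP => /finj.
  move: h01 h02 h12.
  move: (fS 0) (fS 1) (fS 2); rewrite !inE => /orP [/orP [/eqP -> | /eqP ->] | /eqP ->] /orP [/orP [/eqP -> | /eqP ->] | /eqP ->] /orP [/orP [/eqP -> | /eqP ->] | /eqP ->];
    rewrite ?eqxx //= => _ _ _; ring.
apply: gen; [| exact: enum_val_inj | exact: enum_valP].
by rewrite -setUA cardsU1 cards2 !inE negb_or uv uw vw.
Qed.

Lemma tour_facts (R : realFieldType) (n : nat) (M : 'M[R]_n) :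
  gen_tournament M ->
  (forall i, M i i = 0) /\ (forall i j, i != j -> M j i = 1 - M i j).
Proof.
move=> [Hp Hs].
have H : forall i j, M i j + M j i = 1 - (i == j)%:R.
  move=> i j; have := congr1 (fun N : 'M[R]_n => N i j) Hs; rewrite !mxE => <- //.
split.
  move=> i; have := H i i; rewrite eqxx /= subrr => h.
  have := Hp i i; lra.
move=> i j ij; have := H i j; rewrite (negbTE ij) /= subr0 => h; lra.
Qed.

Lemma half_eq (R : realFieldType) : (2^-1 : R) = 1 - 2^-1.
Proof. lra. Qed.

Lemma comp_clan (R : realFieldType) (n : nat) (M : 'M[R]_n) (e : rel 'I_n)
  (Hop : forall i j, i != j -> M j i = 1 - M i j)
  (Hedge : forall p q k, e p q -> ~~ e p k -> ~~ e q k -> k != p -> k != q ->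
     M p k = M q k) (i : 'I_n) :
  clan M (component e i).
Proof.
have key : forall k, ~~ connect e i k -> forall x, connect e i x -> M x k = M i k.
  move=> k nk x /connectP [p]; elim/last_ind: p x => [|p z IH] x /=.
    by move=> _ ->.
  rewrite rcons_path last_rcons => /andP [pp ez] ->.
  have ci : connect e i (last i p) by apply/connectP; exists p.
  have cz : connect e i z by apply: connect_trans ci (connect1 ez).
  rewrite -(IH (last i p) pp erefl); symmetry; apply: (Hedge _ _ _ ez).
  - by apply: contra nk => h; apply: connect_trans ci (connect1 h).
  - by apply: contra nk => h; apply: connect_trans cz (connect1 h).
  - by apply/eqP => hk; move: nk; rewrite hk ci.
  - by apply/eqP => hk; move: nk; rewrite hk cz.
move=> x y k; rewrite !inE => cx cy ck.
have xk : x != k by apply/eqP => h; move: ck; rewrite -h cx.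
have yk : y != k by apply/eqP => h; move: ck; rewrite -h cy.
have -> : M x k = M y k by rewrite (key k ck x cx) (key k ck y cy).
by split => //; rewrite (Hop x k xk) (Hop y k yk) (key k ck x cx) (key k ck y cy).
Qed.

Theorem proposition4p3 (R : realFieldType) (n : nat) (A B : 'M[R]_n) :
  gen_tournament A -> gen_tournament B ->
  same_pminors 2 A B -> same_pminors 3 A B ->
  forall i : 'I_n,
    (clan A (component (eq_graph A B) i) /\ clan B (component (eq_graph A B) i)) /\
    (clan A (component (diff_graph A B) i) /\ clan B (component (diff_graph A B) i)).
Proof.
move=> tA tB S2 S3 i.
have [HdA HopA] := tour_facts _ _ _ tA.
have [HdB HopB] := tour_facts _ _ _ tB.
have P2 : forall u v, u != v -> B u v = A u v \/ B u v = 1 - A u v.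
  move=> u v uv; have := S2 [set u; v]; rewrite cards2 uv => /(_ erefl).
  rewrite !minor2 // (HopA u v uv) (HopB u v uv) => h.
  have : (B u v - A u v) * (1 - A u v - B u v) = 0.
    have -> : (B u v - A u v) * (1 - A u v - B u v) =
       (B u v * (1 - B u v)) - (A u v * (1 - A u v)) by ring.
    by rewrite (oppr_inj h) subrr.
  move/eqP; rewrite mulf_eq0 => /orP [|] /eqP h'.
    by left; apply/eqP; rewrite -subr_eq0 h'.
  by right; lra.
have P3 : forall u v w, u != v -> u != w -> v != w -> cyc A u v w = cyc B u v w.
  move=> u v w uv uw vw; rewrite -!minor3 //; apply: S3.
  by rewrite -setUA cardsU1 cards2 !inE negb_or uv uw vw.
have half : forall x : R, x != 2^-1 -> 2 * x - 1 != 0.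
  move=> x hx; apply/eqP => h; move/eqP: hx; apply; lra.
have core : forall p q k : 'I_n, p != q -> k != p -> k != q ->
   forall x, x != 2^-1 ->
   (2 * x - 1) * (A q k - A p k) = cyc A p q k - cyc B p q k -> A p k = A q k.
  move=> p q k pq kp kq x hx.
  rewrite (P3 p q k pq) 1?eq_sym // subrr => /eqP; rewrite mulf_eq0 (negbTE (half x hx)) /=.
  by rewrite subr_eq0 => /eqP ->.
split; split; apply: comp_clan => // p q k.
- rewrite /eq_graph => /and3P [pq /eqP hpq hx] npk nqk kp kq.
  have nb : forall a b, a != b -> ~~ eq_graph A B a b -> B a b = 1 - A a b.
    move=> a b ab; rewrite /eq_graph ab /=; case: (P2 a b ab) => ->; rewrite ?eqxx //=.
    by rewrite negbK => /eqP ->; rewrite -half_eq.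
  apply: (core p q k pq kp kq (A p q) hx).
  rewrite /cyc (HopA p q pq) (HopB p q pq) (HopA p k) 1?eq_sym // (HopB p k) 1?eq_sym //.
  rewrite (HopA q k) 1?eq_sym // (HopB q k) 1?eq_sym //.
  rewrite (nb p k) 1?eq_sym // (nb q k) 1?eq_sym // -hpq; ring.
- rewrite /eq_graph => /and3P [pq /eqP hpq hx] npk nqk kp kq.
  have nb : forall a b, a != b -> ~~ eq_graph A B a b -> B a b = 1 - A a b.
    move=> a b ab; rewrite /eq_graph ab /=; case: (P2 a b ab) => ->; rewrite ?eqxx //=.
    by rewrite negbK => /eqP ->; rewrite -half_eq.
  have e1 : A p k = A q k.
    apply: (core p q k pq kp kq (A p q) hx).
    rewrite /cyc (HopA p q pq) (HopB p q pq) (HopA p k) 1?eq_sym // (HopB p k) 1?eq_sym //.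
    rewrite (HopA q k) 1?eq_sym // (HopB q k) 1?eq_sym //.
    rewrite (nb p k) 1?eq_sym // (nb q k) 1?eq_sym // -hpq; ring.
  by rewrite (nb p k) 1?eq_sym // (nb q k) 1?eq_sym // e1.
- rewrite /diff_graph => /and3P [pq /eqP hpq hx] npk nqk kp kq.
  have nd : forall a b, a != b -> ~~ diff_graph A B a b -> B a b = A a b.
    move=> a b ab; rewrite /diff_graph ab /=; case: (P2 a b ab) => -> //.
    have -> : 1 - (1 - A a b) = A a b by ring.
    by rewrite eqxx /= negbK => /eqP ->; rewrite -half_eq.
  have hb : B p q = 1 - A p q by rewrite hpq; ring.
  apply: (core p q k pq kp kq (A p q) hx).
  rewrite /cyc (HopA p q pq) (HopB p q pq) (HopA p k) 1?eq_sym // (HopB p k) 1?eq_sym //.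
  rewrite (HopA q k) 1?eq_sym // (HopB q k) 1?eq_sym //.
  rewrite (nd p k) 1?eq_sym // (nd q k) 1?eq_sym // hb; ring.
- rewrite /diff_graph => /and3P [pq /eqP hpq hx] npk nqk kp kq.
  have nd : forall a b, a != b -> ~~ diff_graph A B a b -> B a b = A a b.
    move=> a b ab; rewrite /diff_graph ab /=; case: (P2 a b ab) => -> //.
    have -> : 1 - (1 - A a b) = A a b by ring.
    by rewrite eqxx /= negbK => /eqP ->; rewrite -half_eq.
  have hb : B p q = 1 - A p q by rewrite hpq; ring.
  have e1 : A p k = A q k.
    apply: (core p q k pq kp kq (A p q) hx).
    rewrite /cyc (HopA p q pq) (HopB p q pq) (HopA p k) 1?eq_sym // (HopB p k) 1?eq_sym //.
    rewrite (HopA q k) 1?eq_sym // (HopB q k) 1?eq_sym //.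
    rewrite (nd p k) 1?eq_sym // (nd q k) 1?eq_sym // hb; ring.
  by rewrite (nd p k) 1?eq_sym // (nd q k) 1?eq_sym // e1.
Qed.
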